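(* Let $N \ge \Delta \ge 1$ be integers. Then: (1) $g(N,1)=0$. (2) If $\Delta \geq 2$ and $N-1 \equiv k \pmod{\Delta - 1}$ with $0 \leq k \leq \Delta -2$, then $g(N,\Delta) = \frac{(N-k-1)\Delta}{2} + \binom{k+1}{2} \leq \frac{(N-1)\Delta}{2}$. (3) If $\Delta \geq 2$, then $g(N+1,\Delta) \geq g(N,\Delta)+1$. (4) If $N > \Delta$, then $g(N,\Delta+1) \geq g(N,\Delta)+1$.
   Context: All graphs are finite and simple; $L(F)$ is the line graph of $F$, $e(\cdot)$ the number of edges, $\Delta(\cdot)$ the maximum degree, $\delta(\cdot)$ the minimum degree. For integers $N \ge \Delta \ge 1$, $g(N,\Delta) = \max\{ e(L(F)) : F \text{ acyclic}, e(F)=N, \Delta(F)=\Delta, \delta(F)\geq 1\}$. *)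

(* Defs.v *)
From Stdlib Require Import ClassicalEpsilon.
From mathcomp Require Import all_boot all_order all_algebra.
Set Implicit Arguments. Unset Strict Implicit. Unset Printing Implicit Defensive.

Definition simple_graph (T : finType) (E : {set {set T}}) : bool :=
  [forall e in E, #|e| == 2].

Definition adj (T : finType) (E : {set {set T}}) : rel T :=
  fun x y => (x != y) && ([set x; y] \in E).

Definition acyclic (T : finType) (E : {set {set T}}) : Prop :=
  ~ exists s : seq T, [/\ 3 <= size s, uniq s & cycle (adj E) s].

Definition deg (T : finType) (E : {set {set T}}) (v : T) : nat :=
  #|[set e in E | v \in e]|.

Definition maxdeg (T : finType) (E : {set {set T}}) : nat :=
  \max_(v : T) deg E v.

Definition mindeg_ge1 (T : finType) (E : {set {set T}}) : Prop :=
  forall v : T, 1 <= deg E v.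

Definition line_edges (T : finType) (E : {set {set T}}) : {set {set {set T}}} :=
  [set P : {set {set T}} | [&& P \subset E, #|P| == 2 &
     [exists e in P, exists f in P, (e != f) && (e :&: f != set0)]]].

Definition admissible (N D : nat) (T : finType) (E : {set {set T}}) : Prop :=
  [/\ simple_graph E, acyclic E, #|E| = N, maxdeg E = D & mindeg_ge1 E].

Definition is_g (N D m : nat) : Prop :=
  (exists (T : finType) (E : {set {set T}}),
      admissible N D E /\ #|line_edges E| = m) /\
  (forall (T : finType) (E : {set {set T}}),
      admissible N D E -> #|line_edges E| <= m).

(* g(N, D) := the maximum (chosen by classical description; it exists in
   every case considered by the theorem). *)
Definition g (N D : nat) : nat := epsilon (inhabits 0%N) (is_g N D).

(* Main.v *)
Require Import Defs.
From Stdlib Require Import ClassicalEpsilon.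
From mathcomp Require Import all_boot all_order all_algebra zify ring lra.
Import Order.TTheory GRing.Theory Num.Theory.
Set Implicit Arguments. Unset Strict Implicit. Unset Printing Implicit Defensive.

Definition H (S M : nat) : nat := (S %/ M) * (M * M.+1) + (S %% M) * (S %% M).+1.

Lemma H_eval q k M : k < M -> H (q * M + k) M = q * (M * M.+1) + k * k.+1.
Proof.
move=> kM; have M0 : 0 < M by lia.
by rewrite /H divnMDl // modnMDl divn_small // modn_small // addn0.
Qed.

Lemma Hsup a x M : 0 < M -> x <= M -> H a M + x * x.+1 <= H (a + x) M.
Proof.
move=> M0 xM.
rewrite {1 2}(divn_eq a M).
set q := a %/ M; set k := a %% M.
have kM : k < M by rewrite ltn_mod.
clearbody q k.
rewrite H_eval //.
case: (ltnP (k + x) M) => hkx.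
  rewrite -(addnA (q * M)) H_eval //. clear; nia.
have -> : q * M + k + x = q.+1 * M + (k + x - M) by rewrite mulSn; lia.
rewrite H_eval; last by lia.
have hj : k + x = M + (k + x - M) by lia.
move: (k + x - M) hj => j hj.
rewrite mulSn.
suff : k * k.+1 + x * x.+1 <= M * M.+1 + j * j.+1 by lia.
have e : k * k.+1 + x * x.+1 + 2 * ((M - k) * (M - x)) = M * M.+1 + j * j.+1.
  clear -hj kM xM; nia.
lia.
Qed.

Lemma Hmono a b M : 0 < M -> a <= b -> H a M <= H b M.
Proof.
move=> M0 /subnK <-; elim: (b - a) => [|n IH]; first by rewrite add0n.
apply: (leq_trans IH); rewrite addSn -addn1.
apply: leq_trans (Hsup _ M0 _); [exact: leq_addr| done].
Qed.

Lemma Hconst c x M a : 0 < M -> x <= M -> H a M + c * (x * x.+1) <= H (a + c * x) M.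
Proof.
move=> M0 xM; elim: c => [|c IH]; first by rewrite !mul0n !addn0.
rewrite !mulSn addnA [x + _]addnC addnA.
apply: leq_trans (Hsup _ M0 xM); lia.
Qed.
Section Graph.
Variables (T : finType) (E : {set {set T}}).
Hypothesis simpleE : simple_graph E.

Lemma card_edge e : e \in E -> #|e| = 2.
Proof. by move=> eE; move/forall_inP: simpleE => /(_ e eE) /eqP. Qed.

Lemma deg_sum v : deg E v = \sum_(e in E) (v \in e).
Proof.
rewrite /deg -sum1_card.
rewrite (eq_bigl (fun e => (e \in E) && (v \in e))); last by move=> e; rewrite !inE.
by rewrite big_mkcondr /=; apply: eq_bigr => e _; case: (v \in e).
Qed.

Lemma handshake : \sum_v deg E v = 2 * #|E|.
Proof.
under eq_bigr do rewrite deg_sum.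
rewrite exchange_big /= -sum1_card big_distrr /=.
have h : forall e, e \in E -> \sum_i (i \in e) = 2 * 1.
  move=> e eE; rewrite muln1 -(card_edge eE) -sum1_card [RHS]big_mkcond /=.
  by apply: eq_bigr => v _; case: (v \in e).
exact: (eq_bigr _ h).
Qed.

Definition star v := [set e in E | v \in e].

Lemma inter_le1 e f : e \in E -> f \in E -> e != f -> #|e :&: f| <= 1.
Proof.
move=> eE fE nef; rewrite leqNgt; apply/negP => h.
have he : #|e :&: f| <= #|e| by apply: subset_leq_card; apply: subsetIl.
have hf : #|e :&: f| <= #|f| by apply: subset_leq_card; apply: subsetIr.
rewrite (card_edge eE) in he; rewrite (card_edge fE) in hf.
have e1 : e :&: f == e by (rewrite eqEcard subsetIl (card_edge eE); lia).
have e2 : e :&: f == f by (rewrite eqEcard subsetIr (card_edge fE); lia).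
by move: nef; rewrite -(eqP e1) -{2}(eqP e2) eqxx.
Qed.

Lemma LE_pair P : P \in line_edges E ->
  exists e f, [/\ e \in E, f \in E, e != f, P = [set e; f] & #|e :&: f| = 1].
Proof.
rewrite inE => /and3P [PE P2 /exists_inP [e eP /exists_inP [f fP /andP [nef inef]]]].
have eE : e \in E by apply: (subsetP PE).
have fE : f \in E by apply: (subsetP PE).
exists e, f; split => //.
  apply/esym/eqP; rewrite eqEcard (eqP P2) cards2 nef andbT.
  by apply/subsetP => x; rewrite !inE => /orP [] /eqP ->.
apply/eqP; rewrite eqn_leq inter_le1 //= card_gt0; exact: inef.
Qed.

Lemma line_count : #|line_edges E| = \sum_v 'C(deg E v, 2).
Proof.
have h1 : forall v, 'C(deg E v, 2) = \sum_(P in line_edges E) (P \subset star v).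
  move=> v; rewrite /deg -cards_draws -sum1_card.
  rewrite [RHS]big_mkcond /= [LHS]big_mkcond /=; apply: eq_bigr => P _.
  rewrite !inE; case: (boolP (P \subset star v)) => //= Ps.
  case: (boolP (#|P| == 2)) => P2 /=; last by rewrite andbF.
  have PE : P \subset E.
    by apply/subsetP => x /(subsetP Ps); rewrite inE => /andP [].
  rewrite PE /=; case/cards2P: P2 => e [f [nef Pef]].
  have -> : [exists e in P, exists f in P, (e != f) && (e :&: f != set0)] => //.
  apply/exists_inP; exists e; first by rewrite Pef !inE eqxx.
  apply/exists_inP; exists f; first by rewrite Pef !inE eqxx orbT.
  rewrite nef /=; apply/set0Pn; exists v.
  have := subsetP Ps e; rewrite Pef !inE eqxx => /(_ isT) /andP [_ ->].
  by have := subsetP Ps f; rewrite Pef !inE eqxx orbT => /(_ isT) /andP [_ ->].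
  by case: ifP.
rewrite (eq_bigr _ (fun v _ => h1 v)).
rewrite exchange_big /= -sum1_card.
apply: eq_bigr => P /LE_pair [e [f [eE fE nef -> c1]]].
rewrite -c1 -sum1_card [LHS]big_mkcond /=; apply: eq_bigr => v _.
rewrite subUset !sub1set !inE eE fE /=.
by case: (v \in e); case: (v \in f).
Qed.

Lemma adj_sym x y : adj E x y = adj E y x.
Proof. by rewrite /adj eq_sym setUC. Qed.

Lemma edge_other e u : e \in E -> u \in e -> exists z, z != u /\ e = [set u; z].
Proof.
move=> eE ue; have /cards2P [a [b [nab eab]]] : #|e| == 2 by rewrite card_edge.
move: ue; rewrite eab !inE => /orP [] /eqP ->.
  by exists b; rewrite eq_sym.
by exists a; rewrite setUC.
Qed.

Definition good (s : seq T) := uniq s && sorted (adj E) s.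

Lemma extend u w t e' : acyclic E -> good [:: u, w & t] -> e' \in E -> u \in e' ->
  e' != [set u; w] -> exists z, good [:: z, u, w & t].
Proof.
move=> acy /andP [us pt] e'E ue' ne'.
have [z [zu ez]] := edge_other e'E ue'.
exists z.
have azu : adj E z u by rewrite /adj zu /= setUC -ez.
have zw : z != w by apply: contraNneq ne' => <-; rewrite ez.
move: (us) (pt); rewrite /good /= => /and3P [-> -> ->] /andP [-> ->].
rewrite azu !andbT.
case: (boolP (z \in u :: w :: t)) => // zin.
exfalso; apply: acy.
move: zin; rewrite !inE (negbTE zu) (negbTE zw) /= => zt.
case/splitPr: zt us pt => t1 t2 us pt.
exists [:: u, w & rcons t1 z]; split.
- by rewrite /= size_rcons.
- have : uniq ((u :: w :: rcons t1 z) ++ t2) by rewrite /= cat_rcons.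
  by rewrite cat_uniq => /andP [].
- rewrite /cycle rcons_path; apply/andP; split.
    by move: pt => /= /andP [->]; rewrite -cat_rcons cat_path => /andP [-> _].
  by rewrite /= last_rcons.
Qed.

Lemma good_size s : good s -> size s <= #|T|.
Proof. by case/andP => /card_uniqP <- _; apply: max_card. Qed.

Lemma leaf_aux n (s : seq T) : acyclic E -> #|T| - size s <= n -> good s -> 2 <= size s ->
  exists v e, [/\ e \in E, v \in e & forall e', e' \in E -> v \in e' -> e' = e].
Proof.
move=> acy; elim: n s => [|n IH] s hn gs s2;
  case: s hn gs s2 => [|u [|w t]] //= hn gs _;
  (case: (boolP [forall e' in E, (u \in e') ==> (e' == [set u; w])]) => hall;
  [ exists u, [set u; w]; split;
    [ by move: gs => /andP [_ /andP [/andP [_ ->] _]]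
    | by rewrite !inE eqxx
    | by move=> e' e'E ue'; move/forall_inP: hall => /(_ e' e'E); rewrite ue' => /eqP ]
  | case/forall_inPn: hall => e' e'E; rewrite negb_imply => /andP [ue' ne'];
    have [z gz] := extend acy gs e'E ue' ne';
    have := good_size gz ]).
  by move=> /= h; lia.
by move=> _; apply: (IH _ _ gz) => //=; lia.
Qed.

Lemma leaf : acyclic E -> E != set0 ->
  exists v e, [/\ e \in E, v \in e & forall e', e' \in E -> v \in e' -> e' = e].
Proof.
move=> acy /set0Pn [e eE].
have /cards2P [x [y [nxy exy]]] : #|e| == 2 by rewrite card_edge.
apply: (@leaf_aux #|T| [:: x; y]) => //; first by lia.
by rewrite /good /= !inE nxy /adj nxy -exy eE.
Qed.
End Graph.

Lemma sub_simple (T : finType) (E E' : {set {set T}}) :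
  E' \subset E -> simple_graph E -> simple_graph E'.
Proof.
move=> sub /forall_inP h; apply/forall_inP => e eE'; apply: h; exact: (subsetP sub).
Qed.

Lemma sub_acyclic (T : finType) (E E' : {set {set T}}) :
  E' \subset E -> acyclic E -> acyclic E'.
Proof.
move=> sub acy [s [s3 us cs]]; apply: acy; exists s; split => //.
apply: (sub_cycle _ cs) => x y; rewrite /adj => /andP [-> h] /=; exact: (subsetP sub).
Qed.

Lemma forest_bound n (T : finType) (E : {set {set T}}) :
  #|E| <= n -> simple_graph E -> acyclic E -> E != set0 -> #|E| < #|cover E|.
Proof.
elim: n E => [|n IH] E hn sE acy nE.
  by move: nE; rewrite -card_gt0; lia.
have [v [e [eE ve uniqe]]] := leaf sE acy nE.
have cE : #|E| = (#|E :\ e|).+1 by rewrite (cardsD1 e E) eE.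
have vc : v \in cover E by apply/bigcupP; exists e.
have sub : cover (E :\ e) \subset cover E :\ v.
  apply/subsetP => x /bigcupP [e'' /setD1P [ne'' e''E] xe''].
  rewrite !inE; apply/andP; split.
    by apply: contra_neq ne'' => xv; apply: uniqe => //; rewrite -xv.
  by apply/bigcupP; exists e''.
have ccov : #|cover E :\ v| = (#|cover E|).-1 by rewrite (cardsD1 v (cover E)) vc.
case: (boolP (E :\ e == set0)) => [/eqP E0|nE'].
  have ec : e \subset cover E by apply: bigcup_sup.
  have := subset_leq_card ec; rewrite (card_edge sE eE) cE E0 cards0; lia.
have sE' : E :\ e \subset E by apply: subD1set.
have := IH (E :\ e) _ (sub_simple sE' sE) (sub_acyclic sE' acy) nE'.
have := subset_leq_card sub.
lia.
Qed.

Lemma bin2_double n : 2 * 'C(n, 2) = n * n.-1.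
Proof.
elim: n => [|n IH] //; rewrite binS bin1 mulnDr IH; case: n {IH} => //= n; lia.
Qed.

Lemma sum_H (T : finType) (x : T -> nat) M : 0 < M -> (forall v, x v <= M) ->
  \sum_v x v * (x v).+1 <= H (\sum_v x v) M.
Proof.
move=> M0 hx.
apply: (big_rec2 (fun a b => a <= H b M)); first by [].
move=> v a b _ hab; rewrite addnC [_ + b]addnC.
apply: leq_trans (Hsup _ M0 (hx v)); lia.
Qed.

Lemma upper N D (T : finType) (E : {set {set T}}) : admissible N D E -> 1 <= N -> 
  2 * #|line_edges E| = \sum_v (deg E v).-1 * (deg E v) /\
  \sum_v (deg E v).-1 <= N - 1 /\ (forall v, deg E v <= D) /\ (forall v, 1 <= deg E v).
Proof.
case=> sE acy cE mE minE N1; split; last split; last split.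
- rewrite line_count // big_distrr /=; apply: eq_bigr => v _.
  by rewrite bin2_double mulnC.
- have cov : cover E = setT.
    apply/eqP; rewrite eqEsubset subsetT /=; apply/subsetP => v _.
    have := minE v; rewrite /deg card_gt0 => /set0Pn [e]; rewrite inE => /andP [eE ve].
    by apply/bigcupP; exists e.
  have nE : E != set0 by rewrite -card_gt0 cE.
  have := forest_bound (leqnn _) sE acy nE; rewrite cov cardsT cE => hT.
  have hs := handshake sE; rewrite cE in hs.
  have : \sum_v (deg E v).-1 + #|T| = \sum_v deg E v.
    rewrite -sum1_card -big_split /=; apply: eq_bigr => v _.
    have := minE v; lia.
  lia.
- by move=> v; rewrite -mE; apply: (leq_bigmax v).
- exact: minE.
Qed.

Lemma set2_inj (T : finType) (x y a b : T) : x != y -> a != b -> [set x; y] = [set a; b] ->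
  (x = a /\ y = b) \/ (x = b /\ y = a).
Proof.
move=> nxy nab exy.
have : x \in [set a; b] by rewrite -exy !inE eqxx.
have : y \in [set a; b] by rewrite -exy !inE eqxx orbT.
rewrite !inE => /orP [] /eqP hy /orP [] /eqP hx; subst; rewrite ?eqxx in nxy; by [left|right].
Qed.

Lemma seq_max n (s : seq 'I_n) : s != [::] -> exists2 m, m \in s & forall x, x \in s -> x <= m.
Proof.
elim: s => [|a s IH] // _.
case: (boolP (s == [::])) => [/eqP -> | /IH [m ms hm]].
  by exists a; rewrite ?inE // => x; rewrite inE => /eqP ->.
case: (leqP a m) => am.
  by exists m; rewrite ?inE ?ms ?orbT // => x; rewrite inE => /orP [/eqP -> //|/hm].
exists a; rewrite ?inE ?eqxx // => x; rewrite inE => /orP [/eqP -> //|/hm]; lia.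
Qed.

Section Parent.
Variables (n : nat) (R : {set 'I_n}) (p : 'I_n -> 'I_n).
Hypothesis Hp : forall i, i \in R -> p i < i.

Definition PE : {set {set 'I_n}} := [set [set p i; i] | i in R].

Lemma pne i : i \in R -> p i != i.
Proof. by move=> /Hp h; rewrite neq_ltn h. Qed.

Lemma pf_simple : simple_graph PE.
Proof.
apply/forall_inP => e /imsetP [i iR ->]; by rewrite cards2 pne.
Qed.

Lemma pf_adj x y : adj PE x y -> (y \in R /\ x = p y) \/ (x \in R /\ y = p x).
Proof.
case/andP => nxy /imsetP [i iR exy].
case: (set2_inj nxy (pne iR) exy) => [[-> ->]|[-> ->]]; by [left|right].
Qed.

Lemma pf_acyclic : acyclic PE.
Proof.
case=> s [s3 us cs].
have [m ms hm] : exists2 m, m \in s & forall x, x \in s -> x <= m.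
  by apply: seq_max; case: s s3 {us cs}.
case: (rot_to ms) => i s' ers.
have : uniq (m :: s') by rewrite -ers rot_uniq.
have : cycle (adj PE) (m :: s') by rewrite -ers rot_cycle.
have : 3 <= size (m :: s') by rewrite -ers size_rot.
have hm' : forall x, x \in m :: s' -> x <= m by move=> x; rewrite -ers mem_rot; apply: hm.
case: s' ers hm' => [|y [|a t]] //= _ hm' _.
rewrite rcons_path => /andP [amy /and3P [_ _ alm]].
rewrite !inE negb_or => /andP [/andP [_ _] /andP [yt _]].
have ym : y <= m by apply: hm'; rewrite !inE eqxx orbT.
set z := last a t in alm.
have zat : z \in a :: t by apply: mem_last.
have zm : z <= m by apply: hm'; rewrite in_cons [_ \in y :: _]in_cons zat !orbT.
have y1 : y = p m.
  case: (pf_adj amy) => [[yR my]|[_ ->]] //.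
  have := Hp yR; rewrite -my; lia.
have z1 : z = p m.
  case: (pf_adj alm) => [[mR ->]|[zR mz]] //.
  have := Hp zR; rewrite -mz; lia.
by move: yt; rewrite y1 -z1 -in_cons zat.
Qed.

Lemma pf_card : #|PE| = #|R|.
Proof.
apply: card_in_imset => i j iR jR eij.
case: (set2_inj (pne iR) (pne jR) eij) => [[_ //]|[e1 e2]].
move: e1 e2 (Hp iR) (Hp jR) => /(congr1 val) e1 /(congr1 val) e2 /=; move=> h1 h2; exfalso; rewrite /= in e1 e2; lia.
Qed.

Lemma pf_deg v : deg PE v = #|[set i in R | p i == v]| + (v \in R).
Proof.
rewrite /deg.
have -> : [set e in PE | v \in e] = [set [set p i; i] | i in [set i in R | (v == p i) || (v == i)]].
  apply/setP => e; rewrite !inE; apply/andP/imsetP.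
    case=> /imsetP [i iR ->]; rewrite !inE => vi; exists i => //; by rewrite inE iR.
  case=> i; rewrite inE => /andP [iR vi] ->; split; first by apply/imsetP; exists i.
  by rewrite !inE.
rewrite card_in_imset; last first.
  move=> i j; rewrite !inE => /andP [iR _] /andP [jR _] eij.
  case: (set2_inj (pne iR) (pne jR) eij) => [[_ //]|[e1 e2]].
  move: e1 e2 (Hp iR) (Hp jR) => /(congr1 val) e1 /(congr1 val) e2 /= h1 h2; exfalso; rewrite /= in e1 e2; lia.
case: (boolP (v \in R)) => vR.
  have -> : [set i in R | (v == p i) || (v == i)] = v |: [set i in R | p i == v].
    apply/setP => i; rewrite !inE; case: (eqVneq i v) => [->|niv] /=; first by rewrite vR ?eqxx ?orbT.
    by rewrite orbF eq_sym.
  rewrite cardsU1 inE vR /= (negbTE (pne vR)) addnC; done.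
rewrite addn0; apply: eq_card => i; rewrite !inE.
case: (eqVneq i v) => [->|niv] /=; first by rewrite (negbTE vR).
by rewrite orbF eq_sym.
Qed.
End Parent.

Lemma card_ord_nat n (P : nat -> bool) : #|[set i : 'I_n | P i]| = \sum_(0 <= i < n) P i.
Proof.
rewrite -sum1_card big_mkord [RHS]big_mkcond /=.
rewrite (eq_bigl (fun i : 'I_n => P i)); last by move=> i; rewrite inE.
by rewrite big_mkcond /=; apply: eq_bigr => i _; case: (P i).
Qed.

Lemma sum_interval n lo hi : \sum_(0 <= i < n) (lo <= i < hi) = minn hi n - lo.
Proof.
elim: n => [|n IH]; first by rewrite big_geq //; lia.
rewrite big_nat_recr //= IH.
case: (boolP (lo <= n < hi)) => h /=; lia.
Qed.

Lemma sum_pos n : \sum_(0 <= i < n) (0 < i) = n.-1.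
Proof.
elim: n => [|n IH]; first by rewrite big_geq.
rewrite big_nat_recr //= IH; case: n {IH} => //= n; lia.
Qed.

Lemma sum_eq n j : \sum_(0 <= i < n) (i == j) = (j < n).
Proof.
elim: n => [|n IH]; first by rewrite big_geq.
rewrite big_nat_recr //= IH.
case: (eqVneq n j) => [->|nj] /=; first by rewrite ltnn ltnSn.
by rewrite addn0 ltnS (leq_eqVlt j n) eq_sym (negbTE nj).
Qed.

Lemma sum_odd N : \sum_(0 <= i < N + N) odd i = N.
Proof.
elim: N => [|N IH]; first by rewrite big_geq.
rewrite addSn addnS !big_nat_recr //= IH addnn odd_double; lia.
Qed.

Section Cater.
Variables (N M : nat).
Hypothesis M1 : 0 < M.
Hypothesis MN : M < N.

Definition pn (i : nat) : nat := if i <= 1 then 0 else (i - 2) %/ M.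

Lemma pn_le i : pn i <= i.
Proof. rewrite /pn; case: ifP => // _; apply: leq_trans (leq_div _ _) _; lia. Qed.

Definition cp (i : 'I_N.+1) : 'I_N.+1 := inord (pn i).
Definition cR : {set 'I_N.+1} := [set i : 'I_N.+1 | 0 < i].

Lemma cp_val i : nat_of_ord (cp i) = pn i.
Proof. rewrite /cp inordK // ltnS; apply: leq_trans (pn_le _) _; rewrite -ltnS; exact: ltn_ord. Qed.

Lemma cHp i : i \in cR -> cp i < i.
Proof.
rewrite inE cp_val /pn => i0; case: ifP => // i1.
apply: leq_ltn_trans (leq_div _ _) _; lia.
Qed.

Lemma pn_pred i v : (0 < i) && (pn i == v) =
  if v == 0 then (1 <= i < M + 2) else (v * M + 2 <= i < v * M + M + 2).
Proof.
rewrite /pn; case: (leqP i 1) => i1.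
  case: v => [|v] /=; first by rewrite ltn_addl // andbT.
  have : 0 < v.+1 * M by rewrite muln_gt0.
  case: (boolP (0 < i)) => /= i0; lia.
have -> : 0 < i by lia.
rewrite /= eqn_leq leq_divRL // -ltnS ltn_divLR // mulSn.
case: v => [|v] /=; lia.
Qed.

Definition degc (v : nat) : nat :=
  if v == 0 then M.+1 else (minn (v * M + M + 2) N.+1 - (v * M + 2)).+1.

Lemma cdeg v : deg (PE cR cp) v = degc v.
Proof.
rewrite pf_deg; last exact: cHp.
have -> : [set i in cR | cp i == v] = [set i : 'I_N.+1 | (0 < i) && (pn i == v)].
  by apply/setP => i; rewrite !inE -val_eqE /= cp_val.
rewrite (card_ord_nat N.+1 (fun i => (0 < i) && (pn i == v))).
under eq_bigr do rewrite pn_pred.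
rewrite inE /degc; case: (posnP v) => [v0|v0].
  rewrite sum_interval /=; lia.
rewrite sum_interval /=; lia.
Qed.
End Cater.

Lemma cat_adm N M : 0 < M -> M < N -> admissible N M.+1 (PE (cR N) (@cp N M)).
Proof.
move=> M1 MN.
have Hp := @cHp N M M1 MN.
split.
- exact: pf_simple.
- exact: pf_acyclic.
- rewrite pf_card // /cR (card_ord_nat N.+1 (fun i => 0 < i)) sum_pos //.
- apply/eqP; rewrite eqn_leq; apply/andP; split.
    apply/bigmax_leqP => v _; rewrite cdeg // /degc; case: ifP => // _; lia.
  have h := cdeg M1 MN ord0; rewrite /degc /= in h; rewrite -h.
  exact: (leq_bigmax ord0).
- by move=> v; rewrite cdeg // /degc; case: ifP.
Qed.

Lemma cat_line N M : 0 < M -> M < N ->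
  2 * #|line_edges (PE (cR N) (@cp N M))| = H N.-1 M.
Proof.
move=> M1 MN.
have [h1 _] := upper (cat_adm M1 MN) (ltnW (leq_ltn_trans M1 MN)).
rewrite h1.
under eq_bigr do rewrite cdeg //.
rewrite -(big_mkord xpredT (fun v => (degc N M v).-1 * degc N M v)).
rewrite big_ltn // /H.
set q := N.-1 %/ M; set k := N.-1 %% M.
have ek : N.-1 = q * M + k by rewrite /q /k -divn_eq.
have kM : k < M by rewrite /k ltn_mod.
have q1 : 0 < q by rewrite /q divn_gt0 //; lia.
have qN : q <= N.-1 by rewrite /q; apply: leq_div.
clearbody q k.
rewrite (big_cat_nat _ (n := q)) //=; last by lia.
rewrite (big_cat_nat _ (m := q) (n := q.+1)) //=; last by lia.
rewrite big_nat1.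
rewrite (@eq_big_nat _ _ _ 1 q _ (fun _ => M * M.+1)); last first.
  move=> v /andP [v1 vq]; rewrite /degc (gtn_eqF v1).
  have : v.+1 * M <= q * M by rewrite leq_mul2r vq orbT.
  rewrite mulSn => h.
  have -> : minn (v * M + M + 2) N.+1 - (v * M + 2) = M by lia.
  by rewrite mulnC.
rewrite (@eq_big_nat _ _ _ q.+1 N.+1 _ (fun _ => 0)); last first.
  move=> v /andP [v1 vq]; rewrite /degc (gtn_eqF (leq_ltn_trans (leq0n _) v1)).
  have : q.+1 * M <= v * M by rewrite leq_mul2r v1 orbT.
  rewrite mulSn => h.
  have -> : minn (v * M + M + 2) N.+1 - (v * M + 2) = 0 by lia.
  by [].
rewrite !sum_nat_const_nat /degc (gtn_eqF q1) /=.
have -> : minn (q * M + M + 2) N.+1 - (q * M + 2) = k by lia.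
rewrite muln0 addn0 /=.
have -> : q = (q - 1).+1 by lia.
rewrite mulSn; lia.
Qed.

Section Match.
Variable N : nat.
Hypothesis N1 : 0 < N.

Definition mp (i : 'I_(N + N)) : 'I_(N + N) := insubd i (i.-1).
Definition mR : {set 'I_(N + N)} := [set i : 'I_(N + N) | odd i].

Lemma mp_val i : nat_of_ord (mp i) = i.-1.
Proof. rewrite /mp val_insubd; case: ifP => //; have := ltn_ord i; lia. Qed.

Lemma mHp i : i \in mR -> mp i < i.
Proof. rewrite inE mp_val; case: (nat_of_ord i) => //= j _; lia. Qed.

Lemma mdeg v : deg (PE mR mp) v = 1.
Proof.
rewrite pf_deg; last exact: mHp.
have -> : [set i in mR | mp i == v] = [set i : 'I_(N + N) | odd i && (i.-1 == v)].
  by apply/setP => i; rewrite !inE -val_eqE /= mp_val.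
rewrite (card_ord_nat (N + N) (fun i => odd i && (i.-1 == v))).
have h : forall i, odd i && (i.-1 == v) = ~~ odd v && (i == v.+1).
  case=> [|j] /=; first by rewrite andbF.
  rewrite eqSS; by case: (eqVneq j v) => [->|] //=; rewrite !andbF.
under eq_bigr do rewrite h.
rewrite inE; case: (boolP (odd v)) => ov /=.
  by rewrite big1.
rewrite sum_eq addn0.
have vl := ltn_ord v.
have : v.+1 != N + N by apply/negP => /eqP e; move: (odd_double N); rewrite -addnn -e /= ov.
move=> h2; apply/eqP; rewrite eqb1; lia.
Qed.

Lemma mat_adm : admissible N 1 (PE mR mp).
Proof.
have Hp := mHp.
split.
- exact: pf_simple.
- exact: pf_acyclic.
- by rewrite pf_card // /mR (card_ord_nat (N + N) odd) sum_odd.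
- apply/eqP; rewrite eqn_leq; apply/andP; split.
    by apply/bigmax_leqP => v _; rewrite mdeg.
  have v0 : 0 < N + N by lia.
  rewrite -(mdeg (Ordinal v0)); exact: leq_bigmax.
- by move=> v; rewrite mdeg.
Qed.

Lemma mat_line : #|line_edges (PE mR mp)| = 0.
Proof.
have [h1 _] := upper mat_adm N1.
suff : 2 * #|line_edges (PE mR mp)| = 0 by lia.
by rewrite h1 big1 // => v _; rewrite mdeg.
Qed.
End Match.

Lemma g_eq N D m : is_g N D m -> g N D = m.
Proof.
move=> h.
have hg : is_g N D (g N D) by apply: epsilon_spec; exists m.
case: h => [[T [E [aE cE]]] hle]; case: hg => [[T' [E' [aE' cE']]] hle'].
apply/eqP; rewrite eqn_leq; apply/andP; split.
  by rewrite -cE'; apply: hle.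
by rewrite -cE; apply: hle'.
Qed.

Lemma upperH N D (T : finType) (E : {set {set T}}) : admissible N D E -> 0 < N -> 1 < D ->
  2 * #|line_edges E| <= H N.-1 D.-1.
Proof.
move=> aE N0 D1.
have [h1 [hs [hd hm]]] := upper aE N0.
rewrite h1.
have M0 : 0 < D.-1 by lia.
have e : forall v, (deg E v).-1 * deg E v = (deg E v).-1 * (deg E v).-1.+1.
  by move=> v; rewrite prednK // hm.
rewrite (eq_bigr _ (fun v _ => e v)).
apply: leq_trans (@sum_H T (fun v => (deg E v).-1) D.-1 M0 _) _.
  by move=> v; have := hd v; lia.
apply: Hmono => //; lia.
Qed.

Lemma gD N D : 1 < D -> D <= N -> 2 * g N D = H N.-1 D.-1.
Proof.
move=> D1 DN.
have M0 : 0 < D.-1 by lia.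
have MN : D.-1 < N by lia.
have aE := cat_adm M0 MN.
have eD : D.-1.+1 = D by lia.
rewrite eD in aE.
rewrite (@g_eq N D #|line_edges (PE (cR N) (@cp N D.-1))|); first exact: cat_line.
split; first by exists ('I_N.+1 : finType), (PE (cR N) (@cp N D.-1)).
move=> T E aE'.
have := upperH aE' (leq_trans (ltnW D1) DN) D1.
rewrite -(cat_line M0 MN); lia.
Qed.

Lemma g1 N : 0 < N -> g N 1 = 0.
Proof.
move=> N0; apply: g_eq; split.
  by exists ('I_(N + N) : finType), (PE (mR N) (@mp N)); split; [exact: mat_adm|exact: mat_line].
move=> T E aE.
have [h1 [_ [hd _]]] := upper aE N0.
suff : 2 * #|line_edges E| = 0 by lia.
rewrite h1 big1 // => v _; have := hd v; case: (deg E v) => [|[|]] //.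
Qed.

Lemma H_small k M : k < M -> H k M = k * k.+1.
Proof. by move=> kM; have := H_eval 0 kM; rewrite mul0n add0n. Qed.

Lemma Hstep S M : 0 < M -> M < S -> H S M + 2 <= H S M.+1.
Proof.
move=> M0 MS.
have eS := divn_eq S M.
set q := S %/ M in eS *; set k := S %% M in eS *.
have kM : k < M by rewrite /k ltn_mod.
have q1 : 0 < q by rewrite /q divn_gt0 //; lia.
clearbody q k; subst S.
rewrite H_eval //.
have M1 : M <= M.+1 by [].
case: k kM MS => [|k'] kM MS.
  have : 1 < q by case: q q1 MS => [|[|]] //; lia.
  clear MS; case: q {q1} => [|[|q']] // _.
  case: M M0 M1 kM => [|M'] // _ M1 _.
  have -> : q'.+2 * M'.+1 + 0 = (M' + q' * M'.+1) + M'.+2 by lia.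
  have h1 := Hsup (M' + q' * M'.+1) (ltn0Sn M'.+1) (leqnn M'.+2).
  have h2 := @Hconst q' M'.+1 M'.+2 M' (ltn0Sn M'.+1) M1.
  rewrite H_small in h2; last by lia.
  lia.
clear MS; case: q q1 => [|q'] // _.
have -> : q'.+1 * M + k'.+1 = (k' + q' * M) + M.+1 by lia.
have h1 := Hsup (k' + q' * M) (ltn0Sn M) (leqnn M.+1).
have h2 := @Hconst q' M M.+1 k' (ltn0Sn M) M1.
rewrite H_small in h2; last by lia.
nia.
Qed.

Theorem mainTheorem7 (N D : nat) (HD : (1 <= D)%N) (HDN : (D <= N)%N) :
  [/\ g N 1 = 0%N,
      (forall k : nat, (2 <= D)%N -> (k <= D - 2)%N -> N.-1 = k %[mod D.-1] ->
         ((g N D)%:R = ((N - k - 1) * D)%:R / 2 + ('C(k.+1, 2))%:R :> rat)%R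
         /\ (((N - k - 1) * D)%:R / 2 + ('C(k.+1, 2))%:R
               <= ((N - 1) * D)%:R / 2 :> rat)%R),
      ((2 <= D)%N -> ((g N D).+1 <= g N.+1 D)%N)
    & ((D < N)%N -> ((g N D).+1 <= g N D.+1)%N)].
Proof.
have N0 : 0 < N by lia.
split.
- exact: g1.
- move=> k D2 kD ek.
  have M0 : 0 < D.-1 by lia.
  have kk : N.-1 %% D.-1 = k by rewrite ek modn_small //; lia.
  have e2 := gD D2 HDN.
  have eS := divn_eq N.-1 D.-1; rewrite kk in eS.
  move: e2; rewrite /H kk.
  set q := N.-1 %/ D.-1 in eS *; clearbody q => e2.
  have eD : D.-1.+1 = D by lia.
  have hb := bin2_double k.+1; rewrite /= in hb.
  have e3 : 2 * g N D = (N - k - 1) * D + 2 * 'C(k.+1, 2).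
    rewrite e2 hb eD mulnA.
    have -> : q * D.-1 = N - k - 1 by lia.
    lia.
  have e4 : (N - k - 1) * D + 2 * 'C(k.+1, 2) <= (N - 1) * D.
    rewrite hb.
    have -> : (N - 1) * D = (N - k - 1) * D + k * D by rewrite -mulnDl; congr (_ * _); lia.
    rewrite leq_add2l mulnC leq_mul2l; apply/orP; right; lia.
  move: e3 e4; move: (g N D) ((N - k - 1) * D) ('C(k.+1, 2)) ((N - 1) * D) => a b c d e3 e4.
  have e3' : (2 * a%:R = b%:R + 2 * c%:R :> rat)%R.
    by move/(congr1 (fun x : nat => (x%:R : rat)%R)): e3; rewrite natrD !natrM.
  have e4' : (b%:R + 2 * c%:R <= d%:R :> rat)%R.
    by move: e4; rewrite -(@ler_nat rat) natrD natrM.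
  split; lra.
- move=> D2.
  have := gD D2 HDN; have := gD D2 (leq_trans HDN (leqnSn N)).
  have := Hsup N.-1 (x := 1) (M := D.-1) ltac:(lia) ltac:(lia).
  have -> : N.-1 + 1 = N.+1.-1 by lia.
  lia.
- move=> DN.
  case: (eqVneq D 1) => [eD | D1].
    subst D.
    rewrite g1 //.
    have := gD (ltnSn 1) DN; rewrite /H /= divn1 modn1 /=; lia.
  have D2 : 1 < D by lia.
  have := gD D2 HDN; have := @gD N D.+1 (ltnW D2) DN.
  have := Hstep (S := N.-1) (M := D.-1) ltac:(lia) ltac:(lia).
  have -> : D.-1.+1 = D.+1.-1 by lia.
  lia.
Qed.
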